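(* Let $x\in\mathbb X$ and $N\Subset\mathbb X\setminus\{x\}$. Then \[ |\gamma(x,N)|\,\alpha^N\le\sum_{\substack{\mathcal X\subset\mathbf F(x):\\ \left(\bigcup_{X\in\mathcal X}X\right)\setminus\{x\}=N}}\ \prod_{X\in\mathcal X}\Big(\max\Big\{|W(X)|,\ 1+|W(X)-1|\alpha^S\ \Big|\ \varnothing\neq S\subset X\setminus\{x\}\Big\}-1\Big). \]
   Context: $\mathbb X$ is a finite or countably infinite set, $X\Subset\mathbb X$ means finite subset, $\mathbf F$ is the set of finite subsets, $\mathbf F(x)=\{X\Subset\mathbb X\mid x\in X\}$. Fix $W:\mathbf F\to\mathbb C$, $r:\mathbb X\to[0,1)$, $\alpha=\frac r{1-r}$, $\alpha^S=\prod_{s\in S}\alpha(s)$. Boltzmann factor conditioned on $B$: with $W(X\mid B)=\prod_{C\subset B}W(X\cup C)$ if $X\cap B=\varnothing$, $0$ if $X=\{y\}$ with $y\in B$, $1$ otherwise, set $\kappa(X\mid B)=\prod_{\varnothing\neq S\subset X}W(S\mid B)$ and $\kappa(x\mid B)=\kappa(\{x\}\mid B)$. Kernel: $\gamma(x,N)=\gamma(x,N\mid\varnothing)$ where $\gamma(x,N\mid B)=\sum_{M\subset N}(-1)^{|N\setminus M|}\kappa(x\mid B\cup M)$. A maximum $\max\{a,\ b_S\mid S\in\mathcal S\}$ denotes the maximum of $a$ and all $b_S$ (equal to $a$ if $\mathcal S=\varnothing$). The empty collection $\mathcal X=\varnothing$ has union $\varnothing$; empty products equal $1$. *)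

(* Defs.v *)
From HB Require Import structures.
From mathcomp Require Import all_boot all_order all_algebra.
From mathcomp Require Import finmap.
From mathcomp Require Import complex.
From mathcomp Require Import reals.
Set Implicit Arguments. Unset Strict Implicit. Unset Printing Implicit Defensive.
Import Order.TTheory GRing.Theory Num.Theory.
Local Open Scope ring_scope.
Local Open Scope fset_scope.

(* The ambient set 𝕏 is a countable type T; finite subsets are {fset T};
   complex numbers are R[i] for R : realType. *)

Section Defs.
Variables (R : realType) (T : countType).
Local Notation C := R[i].

Definition Wcond (W : {fset T} -> C) (X B : {fset T}) : C :=
  if X `&` B == fset0 then \prod_(D <- fpowerset B) W (X `|` D)
  else if has (fun y => X == [fset y]) B then 0
  else 1.

Definition kappa (W : {fset T} -> C) (X B : {fset T}) : C :=
  \prod_(S <- fpowerset X | S != fset0) Wcond W S B.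

Definition gammaB (W : {fset T} -> C) (x : T) (N B : {fset T}) : C :=
  \sum_(M <- fpowerset N) ((-1) ^+ #|` N `\` M| * kappa W [fset x] (B `|` M))%R.

Definition gamma (W : {fset T} -> C) (x : T) (N : {fset T}) : C :=
  gammaB W x N fset0.

Definition alpha (r : T -> R) (s : T) : R := (r s / (1 - r s))%R.
Definition alphaS (r : T -> R) (S : {fset T}) : R := \prod_(s <- S) alpha r s.

Definition bound_max (W : {fset T} -> C) (r : T -> R) (x : T) (X : {fset T}) : C :=
  \big[Num.max/`|W X|]_(S <- fpowerset (X `\ x) | S != fset0)
     (1 + `|W X - 1| * (alphaS r S)%:C%C)%R.

(* the right-hand side: sum over collections 𝒳 ⊂ F(x) with (⋃𝒳) \ {x} = N.
   Any such 𝒳 consists of subsets of N ∪ {x}, so it ranges over subsets of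
   fpowerset (x |` N). *)
Definition rhs (W : {fset T} -> C) (r : T -> R) (x : T) (N : {fset T}) : C :=
  \sum_(XX <- fpowerset (fpowerset (x |` N))
         | all (fun X => x \in X) XX && ((\bigcup_(X <- XX) X) `\ x == N))
     \prod_(X <- XX) (bound_max W r x X - 1)%R.

End Defs.

(* Main.v *)
Require Import Defs.
From HB Require Import structures.
From mathcomp Require Import all_boot all_order all_algebra.
From mathcomp Require Import finmap.
From mathcomp Require Import complex.
From mathcomp Require Import reals.
From mathcomp Require Import ring.
Import Order.TTheory GRing.Theory Num.Theory.
Local Open Scope ring_scope.
Local Open Scope fset_scope.

Lemma big_fpowU1 (R : Type) (idx : R) (op : Monoid.com_law idx) (K : choiceType)
  (a : K) (A : {fset K}) (F : {fset K} -> R) : a \notin A ->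
  \big[op/idx]_(X <- fpowerset (a |` A)) F X =
  op (\big[op/idx]_(X <- fpowerset A) F X) (\big[op/idx]_(X <- fpowerset A) F (a |` X)).
Proof.
move=> aA.
rewrite (@big_fsetID _ _ op _ (fun X : {fset K} => a \notin X)) /=; congr (op _ _).
  apply: eq_fbigl => X; rewrite !inE /= !fpowersetE.
  apply/andP/idP => [[sX nX]|sX]; last first.
    split; first exact: fsubset_trans sX (fsubsetU1 _ _).
    by apply: contraNN aA => /(fsubsetP sX).
  apply/fsubsetP => y yX; have := fsubsetP sX y yX; rewrite !inE.
  by case/orP => // /eqP ey; move: nX; rewrite -ey yX.
have -> : [fset x | x in fpowerset (a |` A) & ~~ (a \notin x)] = [fset a |` X | X in fpowerset A].
  apply/fsetP => X; rewrite !inE /= negbK fpowersetE; apply/andP/imfsetP => [[sX aX]|[Y]].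
    exists (X `\ a); first by rewrite /= fpowersetE fsubDset.
    by rewrite fsetD1K.
  rewrite /= fpowersetE => sY ->; split; last by rewrite fset1U1.
  by rewrite fsetUS.
rewrite big_imfset //=.
move=> X Y; rewrite /= !fpowersetE => sX sY e.
have nX : a \notin X by apply: contraNN aA => /(fsubsetP sX).
have nY : a \notin Y by apply: contraNN aA => /(fsubsetP sY).
by rewrite -(fsetU1K nX) e fsetU1K.
Qed.

Lemma alt_sum (Rg : comRingType) (K : choiceType) (N A : {fset K}) :
  \sum_(M <- fpowerset N) ((-1) ^+ #|` N `\` M| * ((A `<=` M)%:R : Rg)) = (A == N)%:R.
Proof.
elim/fset1U_rect: N A => [|a N aN IH] A.
  rewrite fpowerset0 big_seq_fset1 fsetD0 /= expr0 mul1r fsubset0.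
  by [].
rewrite big_fpowU1 //=.
have c1 M : M `<=` N -> #|` (a |` N) `\` M| = (#|` N `\` M|).+1.
  move=> sM.
  have -> : (a |` N) `\` M = a |` (N `\` M).
    apply/fsetP => y; rewrite !inE; case: (y =P a) => //= ->.
    by rewrite (negbTE (contraNN (fsubsetP sM a) aN)).
  by rewrite cardfsU1 inE (negbTE aN) andbF.
have c2 M : M `<=` N -> (a |` N) `\` (a |` M) = N `\` M.
  move=> sM; apply/fsetP => y; rewrite !inE.
  by case: (y =P a) => //= ->; rewrite (negbTE aN) andbF.
have c3 M : M `<=` N -> (A `<=` a |` M) = (A `\ a `<=` M).
  by move=> _; rewrite fsubDset.
rewrite big_seq [X in (_ + X)%R]big_seq.
under eq_bigr => M sM.
  rewrite c1 ?exprS ?mulN1r ?mulNr; last by rewrite -fpowersetE.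
  over.
under [X in (_ + X)%R]eq_bigr => M sM.
  rewrite c2 ?c3; try by rewrite -fpowersetE.
  over.
case aA: (a \in A).
  rewrite big1 ?add0r; last first.
    move=> M; rewrite fpowersetE => sM.
    suff -> : (A `<=` M) = false by rewrite mulr0 oppr0.
    apply/negbTE; apply: contraNN aN => /fsubsetP sA.
    by apply: (fsubsetP sM); apply: sA.
  rewrite -big_seq IH.
  have -> : (A `\ a == N) = (A == a |` N); last by [].
  apply/idP/idP => /eqP H; apply/eqP; [by rewrite -H fsetD1K | by rewrite H fsetU1K].
have -> : A `\ a = A.
  by apply/fsetP => y; rewrite !inE; case: (y =P a) => // ->; rewrite aA.
rewrite -big_split /= big1 // => [|M _]; last by rewrite addNr.
case: eqP => // eA; move: aA; by rewrite eA fset1U1.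
Qed.

Lemma lecR (R : realType) (a b : R) : (a%:C%C <= b%:C%C :> R[i]) = (a <= b).
Proof. by rewrite /Num.le /= eqxx. Qed.

Lemma all_fsetU1 (K : choiceType) (p : pred K) (a : K) (XX : {fset K}) :
  all p (a |` XX) = p a && all p XX.
Proof.
apply/allP/andP => [H|[pa /allP H] y].
  split; first by apply: H; rewrite fset1U1.
  by apply/allP => y yX; apply: H; rewrite fset1Ur.
by move=> /fset1UP[->|/H].
Qed.

Lemma max_ge {F : numDomainType} {a b : F} : a \is Num.real -> b \is Num.real ->
  a <= Num.max a b /\ b <= Num.max a b.
Proof.
move=> ra rb; case: (real_leP ra rb) => h; split => //; exact: ltW.
Qed.

Lemma bigmax_ge (F : numDomainType) (I : eqType) (s : seq I) (P : pred I) (f : I -> F) (a : F) :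
  a \is Num.real -> (forall i, f i \is Num.real) ->
  a <= \big[Num.max/a]_(i <- s | P i) f i /\
  (forall i, i \in s -> P i -> f i <= \big[Num.max/a]_(i <- s | P i) f i).
Proof.
move=> ra rf; elim: s => [|j s [IH1 IH2]]; first by rewrite big_nil.
have rb : \big[Num.max/a]_(i <- s | P i) f i \is Num.real.
  by apply: bigmax_real => // i _; apply: rf.
rewrite big_cons; case: ifP => Pj.
  have [h1 h2] := max_ge (rf j) rb.
  split; first exact: le_trans IH1 h2.
  move=> i; rewrite inE => /orP[/eqP -> _ //|iS Pi].
  exact: le_trans (IH2 i iS Pi) h2.
split => // i; rewrite inE => /orP[/eqP -> |]; first by rewrite Pj.
exact: IH2.
Qed.

Section Main.
Variables (R : realType) (T : countType) (W : {fset T} -> R[i]) (r : T -> R).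
Hypothesis hr : forall s : T, 0 <= r s < 1.
Variables (x : T) (N : {fset T}).
Hypothesis hxN : x \notin N.

Lemma alpha_ge0 s : 0 <= alpha r s.
Proof.
have /andP[h0 h1] := hr s.
by rewrite /alpha divr_ge0 // subr_ge0 ltW.
Qed.

Lemma alphaS_ge0 S : 0 <= alphaS r S.
Proof. by apply: prodr_ge0 => s _; apply: alpha_ge0. Qed.

Lemma alphaSC_ge0 S : 0 <= (alphaS r S)%:C%C :> R[i].
Proof. by rewrite -(rmorph0 (real_complex R)) lecR alphaS_ge0. Qed.

Lemma bm_real X : bound_max W r x X \is Num.real.
Proof.
apply: bigmax_real => [|S _]; first exact: normr_real.
apply: rpredD; first exact: rpred1.
apply: rpredM; first exact: normr_real.
exact: ger0_real (alphaSC_ge0 S).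
Qed.

Lemma bm_f_real X S : ((1 + `|W X - 1| * (alphaS r S)%:C%C)%R : R[i]) \is Num.real.
Proof.
apply: rpredD; first exact: rpred1.
apply: rpredM; first exact: normr_real.
exact: ger0_real (alphaSC_ge0 S).
Qed.

Lemma bm1 X : `|W X| <= bound_max W r x X.
Proof.
have [h _] := @bigmax_ge R[i] {fset T} (fpowerset (X `\ x)) (fun S => S != fset0)
   (fun S => (1 + `|W X - 1| * (alphaS r S)%:C%C)%R) _ (normr_real (W X)) (bm_f_real X).
exact: h.
Qed.

Lemma bm2 X S : S `<=` X `\ x -> S != fset0 ->
  `|W X - 1| * (alphaS r S)%:C%C <= bound_max W r x X - 1.
Proof.
move=> sS nS.
have [_ h] := @bigmax_ge R[i] {fset T} (fpowerset (X `\ x)) (fun S => S != fset0)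
   (fun S => (1 + `|W X - 1| * (alphaS r S)%:C%C)%R) _ (normr_real (W X)) (bm_f_real X).
rewrite lerBrDl; apply: h => //; by rewrite fpowersetE.
Qed.

Definition Gt (P : {fset {fset T}}) (A : {fset T}) : R[i] :=
  \sum_(M <- fpowerset N) ((-1) ^+ #|` N `\` M| *
     ((A `<=` M)%:R * \prod_(D <- fpowerset M | x |` D \in P) W (x |` D)))%R.

Lemma prod_one (M D0 : {fset T}) : M `<=` N ->
  \prod_(D <- fpowerset M | x |` D == D0) W (x |` D) =
  if (x \in D0) && (D0 `\ x `<=` M) then W D0 else 1.
Proof.
move=> sM.
have xD D : D \in fpowerset M -> x \notin D.
  rewrite fpowersetE => sD; apply: contraNN hxN => xD.
  exact: (fsubsetP sM x (fsubsetP sD x xD)).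
case: ifP => [/andP[xD0 sD0]|H].
  rewrite big_mkcond (bigD1_seq (D0 `\ x)) /= ?fset_uniq ?fpowersetE //.
  rewrite fsetD1K // eqxx big1_seq ?mulr1 // => D /andP[nD Dr].
  case: eqP => // e; move: nD; by rewrite -e fsetU1K ?eqxx // xD.
rewrite big1_seq // => D /andP[/eqP e Dr].
move: H; rewrite -e fset1U1 /= fsetU1K ?xD //.
by move: Dr; rewrite fpowersetE => ->.
Qed.

Lemma Gt_U1 (D0 : {fset T}) (P : {fset {fset T}}) (A : {fset T}) : D0 \notin P ->
  Gt (D0 |` P) A = (Gt P A + (x \in D0)%:R * (W D0 - 1) * Gt P (A `|` D0 `\ x))%R.
Proof.
move=> D0P.
rewrite /Gt mulr_sumr -big_split /= big_seq [RHS]big_seq; apply: eq_bigr => M.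
rewrite fpowersetE => sM.
rewrite (bigID (fun D => x |` D == D0)) /=.
have -> : \prod_(D <- fpowerset M | (x |` D \in D0 |` P) && (x |` D == D0)) W (x |` D) =
          \prod_(D <- fpowerset M | x |` D == D0) W (x |` D).
  by apply: eq_bigl => D; rewrite !inE; case: (x |` D == D0); rewrite ?andbF ?andbT.
have -> : \prod_(D <- fpowerset M | (x |` D \in D0 |` P) && (x |` D != D0)) W (x |` D) =
          \prod_(D <- fpowerset M | x |` D \in P) W (x |` D).
  apply: eq_bigl => D; rewrite !inE; case E: (x |` D == D0) => /=; last by rewrite andbT.
  by rewrite (eqP E) (negbTE D0P).
rewrite prod_one // fsubUset.
case: (x \in D0); case: (A `<=` M); case: (D0 `\ x `<=` M) => /=; ring.
Qed.

Definition Ht (P : {fset {fset T}}) (A : {fset T}) : R[i] :=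
  \sum_(XX <- fpowerset P | all (fun X => x \in X) XX &&
                           (A `|` ((\bigcup_(X <- XX) X) `\ x) == N))
     \prod_(X <- XX) (bound_max W r x X - 1)%R.

Lemma Ht_U1 (D0 : {fset T}) (P : {fset {fset T}}) (A : {fset T}) : D0 \notin P ->
  Ht (D0 |` P) A = (Ht P A + (x \in D0)%:R * (bound_max W r x D0 - 1) * Ht P (A `|` D0 `\ x))%R.
Proof.
move=> D0P.
rewrite /Ht [LHS]big_mkcond big_fpowU1 //=; congr (_ + _)%R; first by rewrite -big_mkcond.
rewrite mulr_sumr [RHS]big_mkcond big_seq [RHS]big_seq; apply: eq_bigr => XX.
rewrite fpowersetE => sXX.
have nX : D0 \notin XX by apply: contraNN D0P => /(fsubsetP sXX).
rewrite (@all_fsetU1 _ (fun X : {fset T} => x \in X) D0 XX) (big_fsetU1 _ _ nX) /= (big_fsetU1 _ _ nX) /=.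
rewrite fsetDUl fsetUA.
case: (x \in D0); case: (all _ _); case: (_ == N) => /=; ring.
Qed.

Lemma Gt0 P A : ~~ (A `<=` N) -> Gt P A = 0.
Proof.
move=> nA; rewrite /Gt big1_seq // => M /andP[_]; rewrite fpowersetE => sM.
have -> : (A `<=` M) = false.
  by apply/negbTE; apply: contraNN nA => h; exact: fsubset_trans h sM.
by rewrite mul0r mulr0.
Qed.

Lemma Ht0 P A : ~~ (A `<=` N) -> Ht P A = 0.
Proof.
move=> nA; rewrite /Ht big_mkcond big1_seq // => XX _.
case: ifP => // /andP[_ /eqP e]; move: nA; by rewrite -e fsubsetUl.
Qed.

Lemma Gt_base A : Gt fset0 A = (A == N)%:R.
Proof.
rewrite /Gt -(alt_sum _ _ N A); apply: eq_bigr => M _.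
by rewrite big_pred0 ?mulr1 // => D; rewrite inE.
Qed.

Lemma Ht_base A : Ht fset0 A = (A == N)%:R.
Proof.
rewrite /Ht fpowerset0 big_mkcond big_seq_fset1 /= big_seq_fset0 fset0D fsetU0.
by rewrite big_nil; case: (A == N).
Qed.

Lemma main_ineq P : forall A,
  `|Gt P A| * (alphaS r (N `\` A))%:C%C <= Ht P A.
Proof.
elim/fset1U_rect: P => [|D0 P D0P IH] A.
  rewrite Gt_base Ht_base; case: eqP => [->|_].
    by rewrite fsetDv /alphaS big_seq_fset0 normr1 mul1r.
  by rewrite normr0 mul0r.
rewrite Gt_U1 // Ht_U1 //.
case xD: (x \in D0); last by rewrite !mul0r !addr0 IH.
rewrite !mul1r.
case sD: (D0 `\ x `<=` A).
  have -> : A `|` D0 `\ x = A by apply/fsetUidPl.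
  have -> : (Gt P A + (W D0 - 1) * Gt P A = W D0 * Gt P A)%R by ring.
  have -> : (Ht P A + (bound_max W r x D0 - 1) * Ht P A = bound_max W r x D0 * Ht P A)%R by ring.
  rewrite normrM -mulrA; apply: ler_pM.
  - exact: normr_ge0.
  - by rewrite mulr_ge0 ?normr_ge0 ?alphaSC_ge0.
  - exact: bm1.
  - exact: IH.
case sN: (A `|` D0 `\ x `<=` N); last first.
  rewrite (Gt0 P (A `|` D0 `\ x)) ?sN // (Ht0 P (A `|` D0 `\ x)) ?sN //.
  by rewrite !mulr0 !addr0; exact: IH.
set A' := A `|` D0 `\ x.
set S := D0 `\ x `\` A.
have eA : alphaS r (N `\` A) = (alphaS r (N `\` A') * alphaS r S)%R.
  rewrite /alphaS (big_fsetID _ (mem S)) /= mulrC; congr (_ * _)%R; apply: eq_fbigl => y.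
    have := fsubsetP sN y; rewrite !inE.
    by case: (y \in A); case: (y == x); case: (y \in D0); case: (y \in N) => //= ->.
  have := fsubsetP sN y; rewrite !inE.
  by case: (y \in A); case: (y == x); case: (y \in D0); case: (y \in N) => //= ->.
apply: (le_trans (y := ((`|Gt P A| + `|W D0 - 1| * `|Gt P A'|) * (alphaS r (N `\` A))%:C%C)%R)).
  apply: ler_wpM2r; first exact: alphaSC_ge0.
  by rewrite -normrM ler_normD.
rewrite mulrDl; apply: lerD; first exact: IH.
rewrite eA rmorphM.
have -> : (`|W D0 - 1| * `|Gt P A'| * ((alphaS r (N `\` A'))%:C%C * (alphaS r S)%:C%C) =
   (`|W D0 - 1| * (alphaS r S)%:C%C) * (`|Gt P A'| * (alphaS r (N `\` A'))%:C%C))%R by ring.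
apply: ler_pM.
- by rewrite mulr_ge0 ?normr_ge0 ?alphaSC_ge0.
- by rewrite mulr_ge0 ?normr_ge0 ?alphaSC_ge0.
- apply: bm2; first exact: fsubsetDl.
  by rewrite fsetD_eq0 sD.
- exact: IH.
Qed.

Lemma Ht_rhs : Ht (fpowerset (x |` N)) fset0 = rhs W r x N.
Proof. by rewrite /Ht /rhs; apply: eq_bigl => XX; rewrite fset0U. Qed.

Lemma Gt_gamma : Gt (fpowerset (x |` N)) fset0 = gamma W x N.
Proof.
rewrite /Gt /gamma /gammaB big_seq [RHS]big_seq; apply: eq_bigr => M.
rewrite fpowersetE => sM.
rewrite fsub0set mul1r fset0U; congr (_ * _)%R.
have xM : x \notin M by apply: contraNN hxN => /(fsubsetP sM).
rewrite /kappa fpowerset1 [RHS]big_mkcond [RHS]big_fsetU1 /=; last first.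
  rewrite inE; apply/eqP => e; have := fset11 x; by rewrite -e inE.
rewrite mul1r [RHS]big_seq_fset1.
have -> : ([fset x] != fset0) = true by apply/fset0Pn; exists x; rewrite inE.
rewrite /Wcond.
have -> : ([fset x] `&` M == fset0) = true.
  apply/eqP/fsetP => y; rewrite !inE; case: (y =P x) => // ->; by rewrite (negbTE xM).
rewrite big_seq_cond [RHS]big_seq; apply: eq_bigl => D.
rewrite !fpowersetE; case sD: (D `<=` M) => //=.
by rewrite fsetUS // (fsubset_trans sD sM).
Qed.

End Main.

Theorem lemma6p4 (R : realType) (T : countType)
  (W : {fset T} -> R[i]) (r : T -> R)
  (hr : forall s : T, 0 <= r s < 1)
  (x : T) (N : {fset T}) (hxN : x \notin N) :
  `|gamma W x N| * (alphaS r N)%:C%C <= rhs W r x N.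
Proof.
have := @main_ineq R T W r hr x N hxN (fpowerset (x |` N)) fset0.
by rewrite Gt_gamma // Ht_rhs fsetD0.
Qed.
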